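(* Let $L$ be a finite-dimensional Lie algebra over a field $K$ of characteristic $\neq 2$ such that $\mathrm{HomLie}(L)$ is closed with respect to the anticommutator $\varphi * \psi = \frac12(\varphi\circ\psi+\psi\circ\varphi)$. Then one of the following holds: (i) $\mathrm{HomLie}(L)$, as a Jordan algebra with respect to $*$, is a semisimple Jordan algebra without nonzero nilpotent elements; (ii) there are nonzero subspaces $A, B$ of $L$ such that $A \subseteq B$, $\dim A + \dim B = \dim L$, $[[A,A],B] = 0$ and $[[B,B],A] = 0$. Moreover, if $K$ is algebraically closed, then condition (i) can be replaced by the condition: (i)$'$ the Jordan algebra $\mathrm{HomLie}(L)$ is isomorphic to the direct sum of several copies of $K$.
   Context: A Hom-Lie structure on a Lie algebra $L$ is a linear map $\varphi: L \to L$ satisfying $[[x,y],\varphi(z)] + [[z,x],\varphi(y)] + [[y,z],\varphi(x)] = 0$ for all $x,y,z \in L$. $\mathrm{HomLie}(L)$ is the vector space of all Hom-Lie structures on $L$. *)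

(* Defs.v *)
From HB Require Import structures.
From mathcomp Require Import all_boot all_order all_algebra.
Set Implicit Arguments. Unset Strict Implicit. Unset Printing Implicit Defensive.
Import Order.TTheory GRing.Theory Num.Theory.
Local Open Scope ring_scope.

Section Defs.
Variables (K : fieldType) (V : vectType K).

Definition is_lie (br : V -> V -> V) : Prop :=
  [/\ (forall a x y z, br (a *: x + y) z = a *: br x z + br y z),
      (forall a x y z, br z (a *: x + y) = a *: br z x + br z y),
      (forall x, br x x = 0) &
      (forall x y z, br x (br y z) + br y (br z x) + br z (br x y) = 0)].

Definition is_homlie (br : V -> V -> V) (phi : 'End(V)) : Prop :=
  forall x y z,
    br (br x y) (phi z) + br (br z x) (phi y) + br (br y z) (phi x) = 0.

Definition jmul (phi psi : 'End(V)) : 'End(V) :=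
  2%:R^-1 *: ((phi \o psi)%VF + (psi \o phi)%VF).

(* Jordan powers: jpow n phi = phi^(n+1), with phi^(k+1) = phi * phi^k. *)
Definition jpow (n : nat) (phi : 'End(V)) : 'End(V) := iter n (jmul phi) phi.

Definition jprodv (U W : {vspace 'End(V)}) : {vspace 'End(V)} :=
  (\sum_(u <- vbasis U) \sum_(w <- vbasis W) <[jmul u w]>)%VS.

Definition homlie_ideal (br : V -> V -> V) (I : {vspace 'End(V)}) : Prop :=
  (forall f, f \in I -> is_homlie br f) /\
  (forall f g, f \in I -> is_homlie br g -> jmul f g \in I).

Definition jderived (n : nat) (I : {vspace 'End(V)}) : {vspace 'End(V)} :=
  iter n (fun J => jprodv J J) I.

Definition jsolvable (I : {vspace 'End(V)}) : Prop :=
  exists n, jderived n I = 0%VS.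

(* semisimple: the (solvable) radical is zero, i.e. no nonzero solvable ideal *)
Definition homlie_semisimple (br : V -> V -> V) : Prop :=
  forall I, homlie_ideal br I -> jsolvable I -> I = 0%VS.

Definition homlie_no_nilpotent (br : V -> V -> V) : Prop :=
  forall f, is_homlie br f -> (exists n, jpow n f = 0) -> f = 0.

Definition homlie_iso_Kn (br : V -> V -> V) : Prop :=
  exists n (Phi : 'End(V) -> 'rV[K]_n),
    [/\ (forall a f g, is_homlie br f -> is_homlie br g ->
            Phi (a *: f + g) = a *: Phi f + Phi g),
        (forall f g, is_homlie br f -> is_homlie br g -> Phi f = Phi g -> f = g),
        (forall r, exists f, is_homlie br f /\ Phi f = r) &
        (forall f g, is_homlie br f -> is_homlie br g ->
            Phi (jmul f g) = \row_i (Phi f 0 i * Phi g 0 i))].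

Definition cond_ii (br : V -> V -> V) : Prop :=
  exists A B : {vspace V},
    [/\ A != 0%VS /\ B != 0%VS, (A <= B)%VS,
        (\dim A + \dim B = \dim {:V})%N,
        (forall a a' b, a \in A -> a' \in A -> b \in B -> br (br a a') b = 0) &
        (forall b b' a, b \in B -> b' \in B -> a \in A -> br (br b b') a = 0)].

End Defs.

(* Main.v *)
Require Import Defs.
From HB Require Import structures.
From mathcomp Require Import all_boot all_order all_algebra.
From Stdlib Require Import Classical.
From mathcomp Require Import ring.
Import Order.TTheory GRing.Theory Num.Theory.
Local Open Scope ring_scope.
Set Implicit Arguments. Unset Strict Implicit. Unset Printing Implicit Defensive.

Section Sandwich.
Variables (K : fieldType) (V : vectType K).
Definition sandwich (e h : 'End(V)) := (e \o h \o e)%VF.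
Fact sandwich_is_linear e : linear (sandwich e).
Proof. move=> a x y; rewrite /sandwich comp_lfunDr comp_lfunDl -comp_lfunZr -comp_lfunZl //. Qed.
HB.instance Definition _ e := GRing.isLinear.Build K 'End(V) 'End(V) _ (sandwich e) (sandwich_is_linear e).
End Sandwich.

Section Jordan.
Variables (K : fieldType) (V : vectType K).
Hypothesis two_neq0 : (2%:R : K) != 0.
Local Notation E := 'End(V).
Local Notation "f ** g" := (comp_lfun f g) (at level 40, left associativity).

Implicit Types (f g h a b u : E) (H : {vspace E}).

Definition sqcl H := forall h, h \in H -> h ** h \in H.
Definition reducedv H := forall h, h \in H -> h ** h = 0 -> h = 0.

Lemma sq_add a b : (a + b) ** (a + b) = a ** a + b ** b + (a ** b + b ** a).
Proof.
rewrite comp_lfunDl !comp_lfunDr.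
by rewrite [b ** a + _]addrC addrACA.
Qed.

Lemma jcl H a b : sqcl H -> a \in H -> b \in H -> a ** b + b ** a \in H.
Proof.
move=> sq aH bH.
have : (a + b) ** (a + b) - (a ** a + b ** b) \in H.
  by rewrite memvB ?memvD // sq ?memvD.
by rewrite sq_add addrAC subrr add0r.
Qed.

Lemma Ucl H a b : sqcl H -> a \in H -> b \in H -> a ** b ** a \in H.
Proof.
move=> sq aH bH.
have h1 : a ** (a ** b + b ** a) + (a ** b + b ** a) ** a \in H.
  by rewrite jcl // jcl.
have h2 : (a ** a) ** b + b ** (a ** a) \in H by rewrite jcl // sq.
have : 2%:R^-1 *: ((a ** (a ** b + b ** a) + (a ** b + b ** a) ** a) -
        ((a ** a) ** b + b ** (a ** a))) \in H by rewrite memvZ // memvB.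
suff -> : (a ** (a ** b + b ** a) + (a ** b + b ** a) ** a) -
        ((a ** a) ** b + b ** (a ** a)) = 2%:R *: (a ** b ** a).
  by rewrite scalerA mulVf // scale1r.
rewrite comp_lfunDr comp_lfunDl !comp_lfunA scaler_nat mulr2n.
set x := a ** a ** b; set y := b ** a ** a; set z := a ** b ** a.
rewrite addrAC -!addrA opprD addrCA; congr (_ + _).
by rewrite addrA addNKr addrC addrK.
Qed.


Lemma orth_cl H a b g : sqcl H -> a \in H -> b \in H -> a ** b = 0 -> b ** a = 0 ->
  g \in H -> a ** g ** b + b ** g ** a \in H.
Proof.
move=> sq aH bH ab ba gH.
have ab' X : X ** a ** b = 0 by rewrite -comp_lfunA ab comp_lfun0r.
have := jcl sq (jcl sq aH gH) bH.
by rewrite comp_lfunDl comp_lfunDr !comp_lfunA ab' ba comp_lfun0l addr0 add0r.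
Qed.

Lemma peirce H a b h : sqcl H -> reducedv H -> GRing.closed_field_axiom K ->
  a \in H -> b \in H -> a ** a = a -> b ** b = b -> a ** b = 0 -> b ** a = 0 ->
  (forall k, k \in H -> exists al, a ** k ** a = al *: a) ->
  (forall k, k \in H -> exists al, b ** k ** b = al *: b) ->
  h \in H -> a ** h ** b = 0.
Proof.
move=> sq red cl aH bH aa bb ab ba Ha Hb hH.
have aa' X : X ** a ** a = X ** a by rewrite -comp_lfunA aa.
have bb' X : X ** b ** b = X ** b by rewrite -comp_lfunA bb.
have ab' X : X ** a ** b = 0 by rewrite -comp_lfunA ab comp_lfun0r.
have ba' X : X ** b ** a = 0 by rewrite -comp_lfunA ba comp_lfun0r.
have xH : a ** h ** b + b ** h ** a \in H by exact: orth_cl.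
have xx : (a ** h ** b + b ** h ** a) ** (a ** h ** b + b ** h ** a) =
    a ** h ** b ** h ** a + b ** h ** a ** h ** b.
  by rewrite sq_add !comp_lfunA ba' ab' !comp_lfun0l bb' aa' !add0r.
have [al Hal] := Ha _ (sq _ xH).
rewrite xx comp_lfunDr comp_lfunDl !comp_lfunA aa aa' ab !comp_lfun0l addr0 in Hal.
have [be Hbe] := Hb _ (sq _ xH).
rewrite xx comp_lfunDr comp_lfunDl !comp_lfunA bb bb' ba !comp_lfun0l add0r in Hbe.
set P := a ** h ** b in xH xx Hal Hbe *.
set Q := b ** h ** a in xH xx Hal Hbe *.
have e1 : al *: P = be *: P.
  rewrite {1}/P comp_lfunZl comp_lfunZl -Hal {2}/P comp_lfunZr -Hbe.
  by rewrite /P /Q !comp_lfunA.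
have [albe|ne] := eqVneq al be; last first.
  move/eqP: e1; rewrite -subr_eq0 -scalerBl scaler_eq0 subr_eq0 (negPf ne).
  by move/eqP.
subst be.
have [l hl] := cl 2%N (fun i => if i == 0%N then - al else 0) isT.
rewrite big_ord_recl big_ord1 /= mul0r addr0 expr0 mulr1 in hl.
have aP : a ** P = P by rewrite /P !comp_lfunA aa.
have aQ : a ** Q = 0 by rewrite /Q !comp_lfunA ab !comp_lfun0l.
have bP : b ** P = 0 by rewrite /P !comp_lfunA ba !comp_lfun0l.
have bQ : b ** Q = Q by rewrite /Q !comp_lfunA bb.
have Pa : P ** a = 0 by rewrite /P ba'.
have Qa : Q ** a = Q by rewrite /Q aa'.
have Pb : P ** b = P by rewrite /P bb'.
have Qb : Q ** b = 0 by rewrite /Q ab'.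
set w := a - b.
have ww : w ** w = a + b.
  rewrite /w !comp_lfunDl !comp_lfunDr !comp_lfunNl !comp_lfunNr aa bb ab ba.
  by rewrite !oppr0 addr0 add0r opprK.
have wx : w ** (P + Q) + (P + Q) ** w = 0.
  rewrite /w !comp_lfunDl !comp_lfunDr !comp_lfunNl !comp_lfunNr.
  rewrite aP aQ bP bQ Pa Qa Pb Qb !addr0 !add0r.
  by rewrite !oppr0 !add0r !addr0 addrACA subrr addNr addr0.
set z := l *: w + (P + Q).
have zH : z \in H by rewrite memvD // memvZ // memvB.
have zz : z ** z = 0.
  rewrite /z sq_add -!comp_lfunZl -!comp_lfunZr scalerA ww xx Hal Hbe.
  rewrite -!scalerDr wx scaler0 addr0 -scalerDl -expr2 hl.
  by rewrite addNr scale0r.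
have z0 := red _ zH zz.
have : a ** z ** b = 0 by rewrite z0 comp_lfun0r comp_lfun0l.
rewrite /z comp_lfunDr comp_lfunDl -comp_lfunZr -comp_lfunZl.
have awb : a ** w ** b = 0.
  by rewrite /w comp_lfunDr comp_lfunNr aa ab comp_lfunDl comp_lfunNl ab comp_lfun0l oppr0 addr0.
by rewrite awb scaler0 add0r comp_lfunDr aP aQ addr0 Pb.
Qed.


Section Ev.
Variables (u f : E).
Hypotheses (uu : u ** u = u) (uf : u ** f = f) (fu : f ** u = f).

Definition pw i := iter i (fun g => f ** g) u.
Definition ev (p : {poly K}) := \sum_(i < size p) p`_i *: pw i.

Lemma ev_sz n (p : {poly K}) : (size p <= n)%N -> ev p = \sum_(i < n) p`_i *: pw i.
Proof.
move=> le; rewrite /ev (big_ord_widen n (fun i => p`_i *: pw i) le) big_mkcond.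
apply: eq_bigr => i _; case: ifP => // /negbT; rewrite -leqNgt => le'.
by rewrite nth_default // scale0r.
Qed.

Lemma ev0 : ev 0 = 0.
Proof. by rewrite /ev size_poly0 big_ord0. Qed.

Lemma evD p q : ev (p + q) = ev p + ev q.
Proof.
pose n := maxn (size p) (size q).
rewrite (@ev_sz n) ?size_polyD // (@ev_sz n p) ?leq_maxl // (@ev_sz n q) ?leq_maxr //.
by rewrite -big_split; apply: eq_bigr => i _; rewrite coefD scalerDl.
Qed.

Lemma evZ c p : ev (c *: p) = c *: ev p.
Proof.
rewrite (@ev_sz (size p)) ?size_scale_leq // /ev scaler_sumr.
by apply: eq_bigr => i _; rewrite coefZ scalerA.
Qed.

Lemma evN p : ev (- p) = - ev p.
Proof. by rewrite -scaleN1r evZ scaleN1r. Qed.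

Lemma evB p q : ev (p - q) = ev p - ev q.
Proof. by rewrite evD evN. Qed.

Lemma evC c : ev c%:P = c *: u.
Proof. by rewrite (@ev_sz 1) ?size_polyC_leq1 // big_ord1 coefC. Qed.

Lemma comp_sumr g (I : Type) (r : seq I) (P : pred I) (F : I -> E) :
  g ** (\sum_(i <- r | P i) F i) = \sum_(i <- r | P i) g ** F i.
Proof.
elim: r => [|x r IH]; first by rewrite !big_nil comp_lfun0r.
by rewrite !big_cons; case: (P x); rewrite ?comp_lfunDr IH.
Qed.

Lemma comp_suml g (I : Type) (r : seq I) (P : pred I) (F : I -> E) :
  (\sum_(i <- r | P i) F i) ** g = \sum_(i <- r | P i) F i ** g.
Proof.
elim: r => [|x r IH]; first by rewrite !big_nil comp_lfun0l.
by rewrite !big_cons; case: (P x); rewrite ?comp_lfunDl IH.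
Qed.

Lemma evXM p : ev ('X * p) = f ** ev p.
Proof.
have le : (size ('X * p)%R <= (size p).+1)%N.
  by apply: leq_trans (size_polyMleq _ _) _; rewrite size_polyX.
rewrite (ev_sz le) big_ord_recl coefXM eqxx scale0r add0r /ev comp_sumr.
by apply: eq_bigr => i _; rewrite coefXM /= -comp_lfunZr.
Qed.

Lemma upw i : u ** pw i = pw i.
Proof. by case: i => [|i] //=; rewrite comp_lfunA uf. Qed.

Lemma pwu i : pw i ** u = pw i.
Proof. by elim: i => [|i IH] //=; rewrite -comp_lfunA IH. Qed.

Lemma uev p : u ** ev p = ev p.
Proof. by rewrite /ev comp_sumr; apply: eq_bigr => i _; rewrite -comp_lfunZr upw. Qed.

Lemma evu p : ev p ** u = ev p.
Proof. by rewrite /ev comp_suml; apply: eq_bigr => i _; rewrite -comp_lfunZl pwu. Qed.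

Lemma evM p q : ev (p * q) = ev p ** ev q.
Proof.
elim/poly_ind: p => [|p c IH]; first by rewrite mul0r ev0 comp_lfun0l.
have e1 : (p * 'X + c%:P) * q = 'X * (p * q) + c *: q.
  by rewrite mulrDl mul_polyC mulrAC mulrC.
rewrite e1 evD evZ evXM IH evD evC (mulrC p) evXM comp_lfunDl -comp_lfunZl uev.
by rewrite comp_lfunA.
Qed.

Lemma evX : ev 'X = f.
Proof. by rewrite -[X in ev X]mulr1 evXM -[1]/(1%:P : {poly K}) evC scale1r fu. Qed.

Lemma ev_in H p : sqcl H -> u \in H -> f \in H -> ev p \in H.
Proof.
move=> sq uH fH; elim/poly_ind: p => [|p c IH]; first by rewrite ev0 mem0v.
rewrite evD evC mulrC evXM memvD ?memvZ //.
have com : ev p ** f = f ** ev p by rewrite -evX -!evM mulrC.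
have : 2%:R^-1 *: (f ** ev p + ev p ** f) \in H by rewrite memvZ // jcl.
by rewrite com -mulr2n -scaler_nat scalerA mulVf // scale1r.
Qed.

End Ev.


Lemma closed_root (cl : GRing.closed_field_axiom K) (p : {poly K}) :
  (1 < size p)%N -> exists x, root p x.
Proof.
move=> sp; set n := (size p).-1.
have n0 : (0 < n)%N by rewrite /n -subn1 subn_gt0.
have p0 : p != 0 by rewrite -size_poly_gt0 ltnW.
have lc0 : lead_coef p != 0 by rewrite lead_coef_eq0.
have [x hx] := cl n (fun i => - p`_i / lead_coef p) n0.
exists x; rewrite /root horner_coef.
have sn : size p = n.+1 by rewrite /n prednK // ltnW.
move: (lead_coefE p); rewrite -/n => lcE.
rewrite sn big_ord_recr /= -lcE hx mulr_sumr -big_split big1 // => i _ /=.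
by field.
Qed.

Lemma ex_min (P : nat -> Prop) : (exists n, P n) ->
  exists n, P n /\ forall m, (m < n)%N -> ~ P m.
Proof.
move=> [n Pn].
suff : forall N n, (n <= N)%N -> P n -> exists n, P n /\ forall m, (m < n)%N -> ~ P m.
  by move=> /(_ n n (leqnn n) Pn).
elim => [|N IH] k le Pk.
  by exists k; split => // m; rewrite leqn0 in le; rewrite (eqP le) ltn0.
case: (classic (exists m, (m < k)%N /\ P m)) => [[m [lt Pm]]|no].
  by apply: (IH m) => //; rewrite -ltnS (leq_trans lt le).
by exists k; split => // m lt Pm; apply: no; exists m.
Qed.

Lemma idem_ex H u f : sqcl H -> reducedv H -> GRing.closed_field_axiom K ->
  u \in H -> u ** u = u -> (forall h, h \in H -> u ** h = h /\ h ** u = h) ->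
  f \in H -> f \notin <[u]>%VS ->
  exists e, [/\ e \in H, e ** e = e, e != 0 & e != u].
Proof.
move=> sq red cl uH uu cor fH fnu.
have [uf fu] := cor f fH.
pose ev' := ev u f.
have evD' := evD u f; have evZ' := evZ u f; have evC' := evC u f.
have evM' := evM uu uf; have evX' := evX fu.
have evB' := evB u f; have ev0' := ev0 u f.
have evin p : ev u f p \in H by apply: ev_in.
have [p [p0 evp]] : exists p, p != 0 /\ ev u f p = 0.
  pose d := \dim H.
  pose X := [tuple ev u f 'X^i | i < d.+1].
  have Xnf : ~~ free X.
    apply/negP => fr.
    have : (\dim <<X>> <= \dim H)%N.
      apply: dimvS; apply/span_subvP => x /tnthP [i ->].
      by rewrite tnth_mktuple.
    by rewrite (eqP fr) size_tuple ltnn.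
  have nf : ~ (forall k : 'I_d.+1 -> K,
     \sum_(i < d.+1) k i *: X`_i = 0 -> forall i, k i = 0).
    by move=> hf; move/negP: Xnf; apply; apply/freeP.
  have [k hk] := not_all_ex_not _ _ nf.
  have [hs hi] := imply_to_and _ _ hk.
  have [i ki] := not_all_ex_not _ _ hi.
  exists (\sum_(j < d.+1) k j *: 'X^j); split.
    apply/eqP => /(congr1 (fun q : {poly K} => q`_i)).
    rewrite coef_sum (bigD1 i) //= coefZ coefXn eqxx mulr1 big1 ?addr0 ?coef0 //.
    move=> j ne; rewrite coefZ coefXn (_ : (i == j :> nat) = false) ?mulr0 //.
    by apply/negbTE; rewrite eq_sym.
  rewrite -hs (big_morph _ (evD u f) (ev0 u f)).
  by apply: eq_bigr => j _; rewrite evZ -tnth_nth tnth_mktuple.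
have [n [[m [m0 evm szm]] mmin]] := ex_min (ex_intro
   (fun n => exists q, [/\ q != 0, ev u f q = 0 & size q = n]) _
   (ex_intro _ p (And3 p0 evp erefl))).
have minq (q : {poly K}) : q != 0 -> (size q < size m)%N -> ev u f q != 0.
  move=> q0 lt; apply/eqP => evq; apply: (mmin (size q)); first by rewrite -szm.
  by exists q.
have u0 : u != 0.
  apply/eqP => u0; move: fnu; rewrite -uf u0 comp_lfun0l mem0v.
  done.
have szm1 : (1 < size m)%N.
  rewrite ltnNge; apply/negP => le; move: evm; rewrite (size1_polyC le) evC.
  move/eqP; rewrite scaler_eq0 (negPf u0) orbF => /eqP c0.
  by move: m0; rewrite (size1_polyC le) c0 eqxx.
have [l rl] := closed_root cl szm1.
have [q mq] := factor_theorem _ _ rl.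
have q0 : q != 0 by apply: contraNneq m0 => q0; rewrite mq q0 mul0r.
have szq : size m = (size q).+1.
  by rewrite mq size_mul ?polyXsubC_eq0 // size_XsubC addn2.
have evq0 : ev u f q != 0 by apply: minq; rewrite // szq.
set c := q.[l].
have c0 : c != 0.
  apply/negP => /eqP qr.
  have [r qr'] : exists r, q = r * ('X - l%:P) by apply/factor_theorem; rewrite /root -/c qr.
  have : ev u f q ** ev u f q = 0.
    rewrite -evM' {1}qr' -mulrA (mulrC _ q) -mq evM' evm comp_lfun0r //.
  by move/(red _ (evin q))/eqP; rewrite (negPf evq0).
have [s qs] : exists s, q - c%:P = s * ('X - l%:P).
  by apply/factor_theorem; rewrite /root hornerD hornerN hornerC subrr.
have qq : ev u f q ** ev u f q = c *: ev u f q.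
  have qd : q = c%:P + s * ('X - l%:P) by rewrite -qs addrC subrK.
  rewrite -evM' {1}qd mulrDl mul_polyC -mulrA (mulrC _ q) -mq evD' evZ' evM' evm.
  by rewrite comp_lfun0r addr0.
exists (c^-1 *: ev u f q); split.
- by rewrite memvZ.
  by rewrite -comp_lfunZl -comp_lfunZr qq !scalerA -mulrA mulVf // mulr1.
- by rewrite scaler_eq0 invr_eq0 (negPf c0) (negPf evq0).
apply/eqP => equ.
have : ev u f (q - c%:P) = 0.
  by rewrite evB' evC' -[X in c *: X]equ scalerA divff // scale1r subrr.
move/eqP; apply/negP; apply: minq.
  apply/eqP => qc; move: evm; rewrite mq.
  have -> : q = c%:P by apply/eqP; rewrite -subr_eq0 qc.
  rewrite mul_polyC evZ' evB' evX' evC' => /eqP; rewrite scaler_eq0 (negPf c0) /=.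
  by rewrite subr_eq0 => /eqP fl; move: fnu; rewrite fl memvZ ?memv_line.
apply: leq_ltn_trans (size_polyD _ _) _; rewrite gtn_max size_polyN szq ltnSn /=.
by rewrite -szq (leq_ltn_trans (size_polyC_leq1 _) szm1).
Qed.

Definition corner u H :=
  [/\ u ** u = u, u \in H & forall h, h \in H -> u ** h = h /\ h ** u = h].
Definition diag u H (s : seq E) :=
  [/\ uniq s, (forall x, x \in s -> [/\ x \in H, x ** x = x & x != 0]),
      (forall x y, x \in s -> y \in s -> x != y -> x ** y = 0),
      \sum_(x <- s) x = u & (H <= <<s>>)%VS].

Lemma diag_line u H s x h : diag u H s -> x \in s -> h \in H ->
  exists al, x ** h ** x = al *: x.
Proof.
case=> us sP orth _ sub xs hH.
have hs : h \in <<in_tuple s>>%VS by apply: (subvP sub).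
have ks : (index x s < size s)%N by rewrite index_mem.
have [_ xx _] := sP x xs.
exists (coord (in_tuple s) (Ordinal ks) h).
rewrite [in X in X = _](coord_span hs) comp_sumr comp_suml (bigD1 (Ordinal ks)) //= big1 ?addr0.
  by rewrite -comp_lfunZr -comp_lfunZl (nth_index 0 xs) xx xx.
move=> i ne; rewrite -comp_lfunZr -comp_lfunZl (orth x (s`_i)) ?comp_lfun0l ?scaler0 //.
  by rewrite mem_nth.
apply/eqP => xi; move/eqP: ne; apply; apply/val_inj => /=.
by rewrite xi index_uniq.
Qed.

Lemma sw_props H a : sqcl H -> a \in H -> a ** a = a ->
  [/\ (linfun (sandwich a) @: H <= H)%VS, corner a (linfun (sandwich a) @: H),
      sqcl (linfun (sandwich a) @: H),
      reducedv H -> reducedv (linfun (sandwich a) @: H) &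
      forall x, x \in (linfun (sandwich a) @: H)%VS -> exists2 h, h \in H & x = a ** h ** a].
Proof.
move=> sq aH aa; set H1 := (linfun (sandwich a) @: H)%VS.
have mem x : x \in H1 -> exists2 h, h \in H & x = a ** h ** a.
  by move/memv_imgP => [h hH ->]; exists h; rewrite // lfunE.
have sub : (H1 <= H)%VS by apply/subvP => x /mem [h hH ->]; apply: Ucl.
have ax x : x \in H1 -> a ** x = x /\ x ** a = x.
  by move/mem => [h _ ->]; split; [rewrite !comp_lfunA aa | rewrite -(comp_lfunA _ a a) aa].
split => //.
- split => // ; apply/memv_imgP; exists a => //.
  by rewrite lfunE /= /sandwich aa aa.
- move=> x xH1; apply/memv_imgP; exists (x ** x); first by apply: sq; apply: (subvP sub).
  have [ax1 ax2] := ax x xH1.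
  by rewrite lfunE /= /sandwich comp_lfunA ax1 -comp_lfunA ax2.
- by move=> red x xH1; apply: red; apply: (subvP sub).
Qed.

Lemma dimlt (U W : {vspace E}) w : (U <= W)%VS -> w \in W -> w \notin U ->
  (\dim U < \dim W)%N.
Proof.
move=> UW wW wU; rewrite ltnNge; apply/negP => le.
have /eqP UeW : U == W by rewrite eqEdim UW le.
by move: wU; rewrite UeW wW.
Qed.

Lemma diag_step (cl : GRing.closed_field_axiom K) H u :
  (forall H' u', (\dim H' < \dim H)%N -> corner u' H' -> sqcl H' -> reducedv H' ->
     exists s, diag u' H' s) ->
  corner u H -> sqcl H -> reducedv H -> exists s, diag u H s.
Proof.
move=> IH [uu uH cor] sq red.
have [u0|u0] := eqVneq u 0.
  exists [::]; split => //; first by rewrite big_nil.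
  apply/subvP => h hH; have [<- _] := cor h hH.
  by rewrite u0 comp_lfun0l span_nil mem0v.
case: (classic (exists f, f \in H /\ f \notin <[u]>%VS)) => [[f [fH fnu]]|nof]; last first.
  exists [:: u]; split => //.
  - by move=> x; rewrite inE => /eqP ->.
  - by move=> x y; rewrite !inE => /eqP -> /eqP ->; rewrite eqxx.
  - by rewrite big_seq1.
  rewrite span_seq1; apply/subvP => h hH; apply/negPn/negP => hn; apply: nof.
  by exists h.
have [e [eH ee e0 eu_ne]] := idem_ex sq red cl uH uu cor fH fnu.
have [ue eu] := cor e eH.
set e' := u - e.
have e'H : e' \in H by rewrite memvB.
have ee' : e ** e' = 0 by rewrite /e' comp_lfunDr comp_lfunNr eu ee subrr.
have e'e : e' ** e = 0 by rewrite /e' comp_lfunDl comp_lfunNl ue ee subrr.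
have e'e' : e' ** e' = e'.
  rewrite {1}/e' comp_lfunDl comp_lfunNl ee' oppr0 addr0.
  by have [-> _] := cor _ e'H.
have e'0 : e' != 0 by rewrite /e' subr_eq0 eq_sym.
have eu' : u = e + e' by rewrite /e' addrC subrK.
clearbody e'.
have [sub1 cor1 sq1 red1 mem1] := sw_props sq eH ee.
have [sub2 cor2 sq2 red2 mem2] := sw_props sq e'H e'e'.
set H1 := (linfun (sandwich e) @: H)%VS in sub1 cor1 sq1 red1 mem1.
set H2 := (linfun (sandwich e') @: H)%VS in sub2 cor2 sq2 red2 mem2.
have e'n1 : e' \notin H1.
  apply/negP => /mem1 [h _ e'd].
  have : e' ** e' = 0 by rewrite {2}e'd !comp_lfunA e'e !comp_lfun0l.
  by rewrite e'e'; apply/eqP.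
have en2 : e \notin H2.
  apply/negP => /mem2 [h _ ed].
  have : e ** e = 0 by rewrite {2}ed !comp_lfunA ee' !comp_lfun0l.
  by rewrite ee; apply/eqP.
have [s1 diag1] := IH H1 e (dimlt sub1 e'H e'n1) cor1 sq1 (red1 red).
have [s2 diag2] := IH H2 e' (dimlt sub2 eH en2) cor2 sq2 (red2 red).
have diag1' := diag1; have diag2' := diag2.
case: diag1' => [us1 s1P orth1 sum1 span1].
case: diag2' => [us2 s2P orth2 sum2 span2].
case: cor1 => _ _ c1; case: cor2 => _ _ c2.
have ab a b : a \in s1 -> b \in s2 -> a ** b = 0 /\ b ** a = 0.
  move=> as1 bs2; have [aH1 _ _] := s1P a as1; have [bH2 _ _] := s2P b bs2.
  have [ea ae] := c1 a aH1; have [e'b be'] := c2 b bH2.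
  split.
    by rewrite -ae -e'b -comp_lfunA (comp_lfunA e) ee' comp_lfun0l comp_lfun0r.
  by rewrite -be' -ea -comp_lfunA (comp_lfunA e') e'e comp_lfun0l comp_lfun0r.
have line1 a : a \in s1 -> forall k, k \in H -> exists al, a ** k ** a = al *: a.
  move=> as1 k kH; have [aH1 _ _] := s1P a as1; have [ea ae] := c1 a aH1.
  have ekeH1 : e ** k ** e \in H1 by apply/memv_imgP; exists k => //; rewrite lfunE.
  have [al hal] := diag_line diag1 as1 ekeH1; exists al; rewrite -hal.
  by rewrite !comp_lfunA ae -(comp_lfunA _ e a) ea.
have line2 b : b \in s2 -> forall k, k \in H -> exists al, b ** k ** b = al *: b.
  move=> bs2 k kH; have [bH2 _ _] := s2P b bs2; have [eb be] := c2 b bH2.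
  have ekeH2 : e' ** k ** e' \in H2 by apply/memv_imgP; exists k => //; rewrite lfunE.
  have [al hal] := diag_line diag2 bs2 ekeH2; exists al; rewrite -hal.
  by rewrite !comp_lfunA be -(comp_lfunA _ e' b) eb.
have kill h : h \in H -> e ** h ** e' = 0 /\ e' ** h ** e = 0.
  move=> hH; split.
    rewrite -sum1 -sum2 comp_sumr big1_seq // => b /andP[_ bs2].
    rewrite !comp_suml big1_seq // => a /andP[_ as1].
    have [aH1 aa _] := s1P a as1; have [bH2 bb _] := s2P b bs2.
    have [abz baz] := ab a b as1 bs2.
    exact: (peirce sq red cl (subvP sub1 _ aH1) (subvP sub2 _ bH2) aa bb abz baz
       (line1 a as1) (line2 b bs2) hH).
  rewrite -sum1 -sum2 comp_sumr big1_seq // => a /andP[_ as1].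
  rewrite !comp_suml big1_seq // => b /andP[_ bs2].
  have [aH1 aa _] := s1P a as1; have [bH2 bb _] := s2P b bs2.
  have [abz baz] := ab a b as1 bs2.
  exact: (peirce sq red cl (subvP sub2 _ bH2) (subvP sub1 _ aH1) bb aa baz abz
     (line2 b bs2) (line1 a as1) hH).
have hdec h : h \in H -> h = e ** h ** e + e' ** h ** e'.
  move=> hH; have [uh hu] := cor h hH; have [k1 k2] := kill h hH.
  transitivity (u ** h ** u); first by rewrite uh hu.
  rewrite eu' !comp_lfunDr !comp_lfunDl k1 k2 addr0 add0r.
  done.
exists (s1 ++ s2); split.
- rewrite cat_uniq us1 us2 andbT /=; apply/hasPn => x xs2; apply/negP => xs1.
  have [_ xx x0] := s1P x xs1; have [xx0 _] := ab x x xs1 xs2.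
  by move: x0; rewrite -xx xx0 eqxx.
- move=> x; rewrite mem_cat => /orP [xs|xs].
    by have [xH xx x0] := s1P x xs; split => //; apply: (subvP sub1).
  by have [xH xx x0] := s2P x xs; split => //; apply: (subvP sub2).
- move=> x y; rewrite !mem_cat => /orP[xs|xs] /orP[ys|ys] ne.
  + exact: orth1.
  + exact: (ab x y xs ys).1.
  + exact: (ab y x ys xs).2.
  + exact: orth2.
- by rewrite big_cat sum1 sum2 eu'.
apply/subvP => h hH; rewrite (hdec h hH) span_cat memv_add //.
  by apply: (subvP span1); apply/memv_imgP; exists h => //; rewrite lfunE.
by apply: (subvP span2); apply/memv_imgP; exists h => //; rewrite lfunE.
Qed.

Lemma main_diag (cl : GRing.closed_field_axiom K) n : forall H u,
  (\dim H <= n)%N -> corner u H -> sqcl H -> reducedv H -> exists s, diag u H s.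
Proof.
elim: n => [|n IHn] H u le; apply: diag_step => // H' u' lt.
  by move: (leq_trans lt le).
by apply: IHn; rewrite -ltnS (leq_trans lt le).
Qed.

End Jordan.

Section Lie.
Variables (K : fieldType) (V : vectType K) (br : V -> V -> V).
Hypothesis two_neq0 : (2%:R : K) != 0.
Hypothesis lie : is_lie br.
Local Notation E := 'End(V).
Local Notation "f ** g" := (comp_lfun f g) (at level 40, left associativity).

Lemma br_linl a x y z : br (a *: x + y) z = a *: br x z + br y z.
Proof. by case: lie. Qed.
Lemma br_linr a x y z : br z (a *: x + y) = a *: br z x + br z y.
Proof. by case: lie. Qed.
Lemma br_alt x : br x x = 0.
Proof. by case: lie. Qed.
Lemma br_jac x y z : br x (br y z) + br y (br z x) + br z (br x y) = 0.
Proof. by case: lie. Qed.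

Lemma br0l z : br 0 z = 0.
Proof.
have := br_linl (-1) z z z; rewrite scaleN1r addNr => ->.
by rewrite scaleN1r addNr.
Qed.
Lemma br0r z : br z 0 = 0.
Proof.
have := br_linr (-1) z z z; rewrite scaleN1r addNr => ->.
by rewrite scaleN1r addNr.
Qed.
Lemma br_addl x y z : br (x + y) z = br x z + br y z.
Proof. by rewrite -[x]scale1r br_linl !scale1r. Qed.
Lemma br_addr x y z : br z (x + y) = br z x + br z y.
Proof. by rewrite -[x]scale1r br_linr !scale1r. Qed.
Lemma br_scalel a x z : br (a *: x) z = a *: br x z.
Proof. by rewrite -[a *: x]addr0 br_linl br0l addr0. Qed.
Lemma br_scaler a x z : br z (a *: x) = a *: br z x.
Proof. by rewrite -[a *: x]addr0 br_linr br0r addr0. Qed.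
Lemma br_anti x y : br x y = - br y x.
Proof.
have := br_alt (x + y); rewrite br_addl !br_addr !br_alt add0r addr0.
by move/eqP; rewrite addr_eq0 => /eqP.
Qed.
Lemma br_oppl x y : br (- x) y = - br x y.
Proof. by rewrite -scaleN1r br_scalel scaleN1r. Qed.

Lemma homlie_id : is_homlie br \1%VF.
Proof.
move=> x y z; rewrite !id_lfunE (br_anti (br x y)) (br_anti (br z x)) (br_anti (br y z)).
rewrite -!opprD; apply/eqP; rewrite oppr_eq0; apply/eqP.
have := br_jac x y z.
by move=> <-; rewrite -addrA addrC (addrC (br y (br z x))).
Qed.

Lemma homlie0 : is_homlie br 0.
Proof. by move=> x y z; rewrite !zero_lfunE !br0r !addr0. Qed.

Lemma homlie_lin a f g : is_homlie br f -> is_homlie br g -> is_homlie br (a *: f + g).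
Proof.
move=> hf hg x y z; rewrite !add_lfunE !scale_lfunE !br_linr.
rewrite (addrACA (a *: br (br x y) (f z))) (addrACA (_ *: _ + _ *: _)).
by rewrite -!scalerDr hf hg scaler0 addr0.
Qed.

Lemma cond_from_sq psi : is_homlie br psi -> psi != 0 -> psi ** psi = 0 -> cond_ii br.
Proof.
move=> hp p0 pp.
have pp' v : psi (psi v) = 0 by rewrite -comp_lfunE pp zero_lfunE.
exists (limg psi), (lker psi).
have AB : (limg psi <= lker psi)%VS.
  by apply/subvP => a /memv_imgP [v _ ->]; rewrite memv_ker pp'.
have A0 : limg psi != 0%VS.
  apply: contraNneq p0 => A0; apply/eqP/lfunP => v; rewrite zero_lfunE.
  by apply/eqP; rewrite -memv0 -A0 memv_img ?memvf.
have key b u v : b \in lker psi -> br (br b (psi u)) (psi v) = 0.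
  rewrite memv_ker => /eqP pb.
  have := hp (psi u) v b; rewrite pb pp' !br0r add0r addr0 //.
split.
- split => //; apply: contraNneq A0 => B0.
  by rewrite -subv0 -B0.
- exact: AB.
- by rewrite addnC -(limg_ker_dim psi fullv) capfv.
- move=> a a' b /memv_imgP [u _ ->] /memv_imgP [u' _ ->] bB.
  have := br_jac b (psi u) (psi u').
  rewrite (br_anti (psi u') (br b _)) key // oppr0 addr0.
  rewrite (br_anti (psi u) (br _ b)) (br_anti (psi u') b) br_oppl opprK key //.
  rewrite addr0 => h.
  by rewrite br_anti h oppr0.
- move=> b b' a bB b'B /memv_imgP [u _ ->].
  move: bB b'B; rewrite !memv_ker => /eqP pb /eqP pb'.
  by have := hp b b' u; rewrite pb pb' !br0r !addr0.
Qed.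

End Lie.

Section Final.
Variables (K : fieldType) (V : vectType K) (br : V -> V -> V).
Hypothesis two_neq0 : (2%:R : K) != 0.
Local Notation E := 'End(V).
Local Notation "f ** g" := (comp_lfun f g) (at level 40, left associativity).

Lemma jmul_comm (f g : E) : f ** g = g ** f -> jmul f g = f ** g.
Proof.
move=> c; unfold jmul; rewrite -c -mulr2n -scaler_nat scalerA mulVf ?scale1r //.
Qed.

Lemma jpow_com (f : E) n : f ** jpow n f = jpow n f ** f /\ jpow n.+1 f = f ** jpow n f.
Proof.
elim: n => [|n [c1 e1]]; first by split => //; rewrite /jpow /= jmul_comm.
have c2 : f ** jpow n.+1 f = jpow n.+1 f ** f by rewrite e1 -comp_lfunA -c1.
split => //.
by rewrite [LHS]/jpow iterS -/(jpow n.+1 f) jmul_comm.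
Qed.

Lemma jpowS (f : E) n : jpow n.+1 f = f ** jpow n f.
Proof. by case: (jpow_com f n). Qed.

Lemma jpow_add (f : E) a b : jpow a f ** jpow b f = jpow (a + b).+1 f.
Proof.
elim: a => [|a IH]; first by rewrite add0n jpowS.
by rewrite jpowS -comp_lfunA IH addSn (jpowS f (a + b).+1).
Qed.

Lemma jpow_zero (f : E) m k : jpow m f = 0 -> jpow (m + k) f = 0.
Proof.
move=> z; elim: k => [|k IH]; first by rewrite addn0.
by rewrite addnS jpowS IH comp_lfun0r.
Qed.

Hypothesis clos : forall f g, is_homlie br f -> is_homlie br g -> is_homlie br (jmul f g).

Lemma jpow_hom (f : E) n : is_homlie br f -> is_homlie br (jpow n f).
Proof.
move=> hf; elim: n => [|n IH] //.
by rewrite /jpow iterS; apply: clos.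
Qed.

Lemma homlie_sq (f : E) : is_homlie br f -> is_homlie br (f ** f).
Proof. by move=> hf; rewrite -jmul_comm //; apply: clos. Qed.

Definition NS := forall psi, is_homlie br psi -> psi ** psi = 0 -> psi = 0.

Lemma no_nil : NS -> homlie_no_nilpotent br.
Proof.
move=> ns f hf [n]; elim: n => [|n IH] z; first by [].
apply: IH; apply: ns; first exact: jpow_hom.
by rewrite jpow_add -addSn jpow_zero.
Qed.

Lemma sub_sum_seq (I : eqType) (r : seq I) (F : I -> {vspace E}) (U : {vspace E}) :
  (forall i, i \in r -> (F i <= U)%VS) -> (\sum_(i <- r) F i <= U)%VS.
Proof.
elim: r => [|x r IH] h; first by rewrite big_nil sub0v.
rewrite big_cons subv_add h ?mem_head //= IH // => i ir.
by apply: h; rewrite in_cons ir orbT.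
Qed.

Lemma sup_sum_seq (I : eqType) (r : seq I) (F : I -> {vspace E}) (U : {vspace E}) x :
  x \in r -> (U <= F x)%VS -> (U <= \sum_(i <- r) F i)%VS.
Proof.
elim: r => [|y r IH] //; rewrite in_cons big_cons => /orP [/eqP <-|xr] le.
  exact: subv_trans le (addvSl _ _).
exact: subv_trans (IH xr le) (addvSr _ _).
Qed.

Lemma semis : NS -> homlie_semisimple br.
Proof.
move=> ns I [Ihom Iid] [n Jn].
suff : forall n (J : {vspace E}), (J <= I)%VS -> jderived n J = 0%VS -> J = 0%VS.
  by move=> /(_ n I (subvv I) Jn).
elim => [|m IH] J JI; first by [].
rewrite /jderived iterSr -/(jderived m _) => jm.
have JJI : (jprodv J J <= I)%VS.
  apply: sub_sum_seq => u uJ; apply: sub_sum_seq => w wJ.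
  rewrite -memvE; apply: Iid; first exact: (subvP JI _ (vbasis_mem uJ)).
  by apply: Ihom; apply: (subvP JI _ (vbasis_mem wJ)).
have JJ0 := IH _ JJI jm.
apply/eqP; rewrite -dimv_eq0; apply/negP => /negP dJ.
have sz : (0 < size (vbasis J))%N by rewrite size_tuple lt0n.
set f := (vbasis J)`_0.
have fJ : f \in vbasis J by apply: mem_nth.
have f0 : f != 0 := free_not0 (basis_free (vbasisP J)) fJ.
have : jmul f f \in jprodv J J.
  rewrite memvE; apply: (sup_sum_seq fJ); apply: (sup_sum_seq fJ).
  exact: subvv.
rewrite JJ0 memv0 jmul_comm // => /eqP ff.
move/eqP: f0; apply; apply: ns ff.
by apply: Ihom; apply: (subvP JI); apply: vbasis_mem.
Qed.

End Final.

Section Iso.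
Variables (K : fieldType) (V : vectType K).
Hypothesis two_neq0 : (2%:R : K) != 0.
Local Notation E := 'End(V).
Local Notation "f ** g" := (comp_lfun f g) (at level 40, left associativity).

Lemma exists_vspace (P : E -> Prop) : P 0 ->
  (forall a f g, P f -> P g -> P (a *: f + g)) ->
  exists H : {vspace E}, forall f, f \in H <-> P f.
Proof.
move=> P0 Plin.
have Psum (s : seq E) : (forall x, x \in s -> P x) -> forall f, f \in <<s>>%VS -> P f.
  move=> sP f fs; have fs' : f \in <<in_tuple s>>%VS := fs.
  rewrite (coord_span fs'); apply: (big_ind P) => //.
    by move=> x y Px Py; rewrite -[x]scale1r; apply: Plin.
  move=> i _; rewrite -[_ *: _]addr0; apply: Plin => //.
  by apply: sP; apply: mem_nth.
suff : forall k (s : seq E), (\dim (fullv : {vspace E}) - size s <= k)%N -> free s ->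
    (forall x, x \in s -> P x) -> exists H : {vspace E}, forall f, f \in H <-> P f.
  by move=> /(_ _ [::] (leqnn _)); apply => //; rewrite /free span_nil dim_vline eqxx.
elim => [|k IH] s le fr sP.
  case: (classic (exists f, P f /\ f \notin <<s>>%VS)) => [[f [Pf fn]]|no].
    have fr' : free (f :: s) by rewrite free_cons fn.
    have : (\dim <<f :: s>> <= \dim (fullv : {vspace E}))%N by apply: dimvS; apply: subvf.
    rewrite (eqP fr') /=; move: le; rewrite leqn0 subn_eq0 => le1 le2.
    by move: (leq_trans le2 le1); rewrite ltnn.
  exists <<s>>%VS => f; split; first exact: Psum.
  by move=> Pf; apply: NNPP => fn; apply: no; exists f; split => //; apply/negP.
case: (classic (exists f, P f /\ f \notin <<s>>%VS)) => [[f [Pf fn]]|no].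
  apply: (IH (f :: s)).
  - by move: le; rewrite /= subnS => le; rewrite -subn1 leq_subLR add1n.
  - by rewrite free_cons fn.
  by move=> x; rewrite in_cons => /orP [/eqP ->|/sP].
exists <<s>>%VS => f; split; first exact: Psum.
by move=> Pf; apply: NNPP => fn; apply: no; exists f; split => //; apply/negP.
Qed.

Section Orth.
Variable s : seq E.
Hypotheses (us : uniq s) (sid : forall x, x \in s -> x ** x = x)
  (orth : forall x y, x \in s -> y \in s -> x != y -> x ** y = 0).

Lemma sum_mul_l (c : 'I_(size s) -> K) (i : 'I_(size s)) :
  s`_i ** (\sum_(j < size s) c j *: s`_j) = c i *: s`_i.
Proof.
rewrite comp_sumr (bigD1 i) //= big1 ?addr0.
  by rewrite -comp_lfunZr sid // mem_nth.
move=> j ne; rewrite -comp_lfunZr orth ?scaler0 ?mem_nth //.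
by rewrite nth_uniq // eq_sym.
Qed.

Lemma sum_mul_r (c : 'I_(size s) -> K) (i : 'I_(size s)) :
  (\sum_(j < size s) c j *: s`_j) ** s`_i = c i *: s`_i.
Proof.
rewrite comp_suml (bigD1 i) //= big1 ?addr0.
  by rewrite -comp_lfunZl sid // mem_nth.
move=> j ne; rewrite -comp_lfunZl orth ?scaler0 ?mem_nth //.
by rewrite nth_uniq.
Qed.

Lemma sum_mul (a b : 'I_(size s) -> K) :
  (\sum_(j < size s) a j *: s`_j) ** (\sum_(j < size s) b j *: s`_j) =
  \sum_(j < size s) (a j * b j) *: s`_j.
Proof.
rewrite comp_sumr; apply: eq_bigr => j _.
by rewrite -comp_lfunZr sum_mul_r scalerA mulrC.
Qed.

Lemma free_orth : (forall x, x \in s -> x != 0) -> free (in_tuple s).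
Proof.
move=> s0; apply/freeP => k hk i.
have := congr1 (comp_lfun s`_i) hk; rewrite sum_mul_l comp_lfun0r => /eqP.
rewrite scaler_eq0 (negPf (s0 _ (mem_nth 0 (ltn_ord i)))) orbF.
by move/eqP.
Qed.

End Orth.

Lemma diag_iso (br : V -> V -> V) (H : {vspace E}) s :
  (forall f, f \in H <-> is_homlie br f) -> diag \1%VF H s -> homlie_iso_Kn br.
Proof.
move=> Hc [us sP orth _ sub].
have sid x : x \in s -> x ** x = x by move=> /sP [].
have s0 x : x \in s -> x != 0 by move=> /sP [].
have fr := free_orth us sid orth s0.
have sH : (<<s>> <= H)%VS by apply/span_subvP => x /sP [].
have inS f : is_homlie br f -> f \in <<in_tuple s>>%VS.
  by move=> /Hc fH; apply: (subvP sub).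
exists (size s), (fun f => \row_(i < size s) coord (in_tuple s) i f); split.
- by move=> a f g _ _; apply/rowP => i; rewrite !mxE linearP.
- move=> f g /inS fS /inS gS e.
  rewrite (coord_span fS) (coord_span gS); apply: eq_bigr => i _.
  by have := congr1 (fun M : 'rV_(size s) => M 0 i) e; rewrite /= !mxE => ->.
- move=> r; exists (\sum_(i < size s) r 0 i *: s`_i); split.
    apply/Hc; apply: (subvP sH); apply: memv_suml => i _.
    by rewrite memvZ // memv_span // mem_nth.
  by apply/rowP => i; rewrite mxE coord_sum_free.
move=> f g /inS fS /inS gS; apply/rowP => i; rewrite !mxE.
pose cf j := coord (in_tuple s) j f; pose cg j := coord (in_tuple s) j g.
have fE : f = \sum_j cf j *: s`_j := coord_span fS.
have gE : g = \sum_j cg j *: s`_j := coord_span gS.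
have fg : f ** g = \sum_j (cf j * cg j) *: s`_j by rewrite {1}fE {1}gE sum_mul.
have gf : g ** f = \sum_j (cf j * cg j) *: s`_j.
  by rewrite {1}fE {1}gE sum_mul //; apply: eq_bigr => j _; rewrite mulrC.
unfold jmul; rewrite fg gf -mulr2n -scaler_nat scalerA mulVf // scale1r.
by rewrite coord_sum_free.
Qed.

End Iso.

Unset Implicit Arguments.

Theorem proposition2p4 (K : fieldType) (V : vectType K) (br : V -> V -> V) :
  (2%:R : K) != 0 ->
  is_lie br ->
  (forall f g, is_homlie br f -> is_homlie br g -> is_homlie br (jmul f g)) ->
  ((homlie_semisimple br /\ homlie_no_nilpotent br) \/ cond_ii br) /\
  (GRing.closed_field_axiom K -> homlie_iso_Kn br \/ cond_ii br).
Proof.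
move=> two lie clos.
case: (classic (NS br)) => [ns|nns]; last first.
  have [psi [hp pp p0]] : exists psi, [/\ is_homlie br psi, (psi \o psi)%VF = 0 & psi != 0].
    apply: NNPP => no; apply: nns => psi hp pp; apply: NNPP => p0; apply: no.
    by exists psi; split => //; apply/eqP.
  have c := cond_from_sq lie hp p0 pp.
  by split; right.
split; first by left; split; [exact: semis | exact: no_nil].
move=> cl; left.
have [H HP] := exists_vspace (homlie0 lie) (fun a f g => @homlie_lin _ _ _ lie a f g).
have cor : corner \1%VF H.
  split; [exact: comp_lfun1l | by apply/HP; apply: homlie_id |].
  by move=> h _; rewrite comp_lfun1l comp_lfun1r.
have sq : sqcl H by move=> h /HP hh; apply/HP; apply: homlie_sq.
have red : reducedv H by move=> h /HP hh; apply: ns.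
have [s ds] := main_diag two cl (leqnn _) cor sq red.
exact (diag_iso two HP ds).
Qed.
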